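(* For all integers $r,q\ge1$, every $(3,2r)$-modular variety is $(2^{q+1}-1,\,2r^q)$-modular.
   Context: $\circ$ denotes relational composition, juxtaposition denotes intersection. For relations $X,Y$ and $m\ge1$, $X\circ_m Y$ denotes $X\circ Y\circ X\circ\cdots$ with $m$ factors. For $m\ge3$, a variety $\mathcal V$ is $(m,k)$-modular if every algebra in $\mathcal V$ satisfies $\alpha(\beta\circ_m\alpha\gamma)\subseteq\alpha\beta\circ_k\alpha\gamma$ for all congruences $\alpha,\beta,\gamma$. *)

(* Defs.v *)
From mathcomp Require Import all_boot.
Set Implicit Arguments. Unset Strict Implicit. Unset Printing Implicit Defensive.

Record signature := Signature {
  opsym : Type;
  arity : opsym -> nat
}.

Record algebra (S : signature) := Algebra {
  carrier :> Type;
  op : forall f : opsym S, ('I_(arity f) -> carrier) -> carrier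
}.

Inductive term (S : signature) : Type :=
| Var : nat -> term S
| App : forall f : opsym S, ('I_(arity f) -> term S) -> term S.

Fixpoint eval (S : signature) (A : algebra S) (v : nat -> A) (t : term S) : A :=
  match t with
  | Var n => v n
  | App f ts => @op S A f (fun i => eval v (ts i))
  end.

Definition identity (S : signature) := (term S * term S)%type.

Definition satisfies (S : signature) (A : algebra S) (e : identity S) : Prop :=
  forall v : nat -> A, eval v e.1 = eval v e.2.

(* A variety is an equational class: the variety defined by a set of
   identities Sigma consists of all S-algebras satisfying every identity
   of Sigma (Birkhoff's HSP theorem). *)
Definition in_variety (S : signature) (Sigma : identity S -> Prop)
  (A : algebra S) : Prop :=
  forall e, Sigma e -> satisfies A e.

Definition relation (T : Type) := T -> T -> Prop.

Definition rcomp (T : Type) (X Y : relation T) : relation T :=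
  fun x z => exists y, X x y /\ Y y z.

(* intersection (written as juxtaposition in the paper) *)
Definition rmeet (T : Type) (X Y : relation T) : relation T :=
  fun x y => X x y /\ Y x y.

(* X ∘_m Y = X ∘ Y ∘ X ∘ ... with m factors (m >= 1);
   for m = 0 we put the diagonal (never used). *)
Fixpoint altcomp (T : Type) (X Y : relation T) (m : nat) : relation T :=
  match m with
  | 0 => fun x y => x = y
  | 1 => X
  | m'.+1 => rcomp X (altcomp Y X m')
  end.

Definition rsubset (T : Type) (X Y : relation T) : Prop :=
  forall x y, X x y -> Y x y.

Definition is_congruence (S : signature) (A : algebra S) (R : relation A) : Prop :=
  [/\ (forall x, R x x),
      (forall x y, R x y -> R y x),
      (forall x y z, R x y -> R y z -> R x z) &
      (forall (f : opsym S) (a b : 'I_(arity f) -> A),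
          (forall i, R (a i) (b i)) -> R (@op S A f a) (@op S A f b))].

Definition mk_modular (S : signature) (Sigma : identity S -> Prop) (m k : nat) : Prop :=
  forall A : algebra S, in_variety Sigma A ->
  forall alpha beta gamma : relation A,
    is_congruence alpha -> is_congruence beta -> is_congruence gamma ->
    rsubset (rmeet alpha (altcomp beta (rmeet alpha gamma) m))
            (altcomp (rmeet alpha beta) (rmeet alpha gamma) k).

(* Main.v *)
Require Import Defs.
From mathcomp Require Import all_boot zify.
From Stdlib Require Import FunctionalExtensionality ProofIrrelevance ClassicalEpsilon.
Set Implicit Arguments. Unset Strict Implicit.

Section Chains.
Variable T : Type.
Implicit Types X Y : relation T.

Definition stp X Y (i : nat) : relation T := if odd i then Y else X.
Definition good X Y (f : nat -> T) n := forall i, i < n -> stp X Y i (f i) (f i.+1).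
Definition chain X Y n x y := exists f : nat -> T, [/\ f 0 = x, f n = y & good X Y f n].

Lemma stpS X Y i : stp X Y i.+1 = stp Y X i.
Proof. by rewrite /stp /=; case: (odd i). Qed.

Lemma chainS X Y n x y : chain X Y n.+1 x y <-> exists u, X x u /\ chain Y X n u y.
Proof.
split.
- case=> f [f0 fn fs]; exists (f 1); split; first by rewrite -f0; exact: (fs 0 isT).
  exists (fun i => f i.+1); split => // i lt; rewrite -stpS; exact: fs.
- case=> u [xu [f [f0 fn fs]]].
  exists (fun i => if i is j.+1 then f j else x); split => //.
  case=> [|i] lt /=; first by rewrite f0; exact: xu.
  rewrite stpS; exact: fs.
Qed.

Lemma altcompE X Y n x y : altcomp X Y n x y <-> chain X Y n x y.
Proof.
case: n X Y x y => [|n] X Y x y.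
  split => [->|]; first by exists (fun _ => y); split.
  by case=> f [<- <- _].
elim: n X Y x y => [|n IH] X Y x y.
  split => [H|].
    exists (fun i => if i is 0 then x else y); split=> //; case=> //= _; exact: H.
  by case=> f [f0 f1 fs]; rewrite -f0 -f1; exact: (fs 0 isT).
rewrite chainS /=; split => -[u [xu H]]; exists u; split => //; by apply/IH.
Qed.

Lemma stp_shift X Y a i : ~~ odd a -> stp X Y (a + i) = stp X Y i.
Proof. by move=> ea; rewrite /stp oddD (negbTE ea). Qed.

Lemma stp_rev X Y a i : odd a -> i < a -> stp X Y (a - i.+1) = stp X Y i.
Proof. by move=> oa lt; rewrite /stp oddB // oa /=; case: odd. Qed.

Lemma stp_rev2 X Y a i : ~~ odd a -> i <= a -> stp X Y (a - i) = stp X Y i.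
Proof. by move=> oa lt; rewrite /stp oddB // (negbTE oa). Qed.


Lemma stp_sym X Y i u v : (forall u v, X u v -> X v u) -> (forall u v, Y u v -> Y v u) ->
  stp X Y i u v -> stp X Y i v u.
Proof. by rewrite /stp; case: odd; auto. Qed.

Lemma stp_refl X Y i u : (forall u, X u u) -> (forall u, Y u u) -> stp X Y i u u.
Proof. by rewrite /stp; case: odd; auto. Qed.

Lemma stp_trans X Y i u v w : (forall u v w, X u v -> X v w -> X u w) ->
  (forall u v w, Y u v -> Y v w -> Y u w) ->
  stp X Y i u v -> stp X Y i v w -> stp X Y i u w.
Proof. by rewrite /stp; case: odd; eauto. Qed.

Lemma chain_shift X Y f n a l : ~~ odd a -> a + l <= n -> good X Y f n ->
  chain X Y l (f a) (f (a + l)).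
Proof.
move=> ea al g; exists (fun i => f (a + i)); split => //; first by rewrite addn0.
move=> i il /=; rewrite -(stp_shift _ _ _ ea) addnS; apply: g; lia.
Qed.

Lemma chain_rev X Y f n a l :
  (forall u v, X u v -> X v u) -> (forall u v, Y u v -> Y v u) ->
  (forall u, X u u) -> (forall u, Y u u) ->
  odd a -> l < a -> a <= n -> good X Y f n -> chain X Y l.+1 (f a) (f (a - l)).
Proof.
move=> sX sY rX rY oa la an g; exists (fun i => f (a - minn i l)); split.
- by rewrite min0n subn0.
- by have -> : minn l.+1 l = l by lia.
move=> i il; case: (ltngtP i l) => H.
- have -> : minn i.+1 l = i.+1 by lia.
  have e : a - i = (a - i.+1).+1 by lia.
  rewrite e -(@stp_rev X Y a i oa); last by lia.
  apply: stp_sym => //; apply: g; lia.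
- lia.
- subst i; have -> : minn l.+1 l = l by lia.
  exact: stp_refl.
Qed.

Lemma tt_chain X Y l u v b :
  (forall u v, X u v -> X v u) -> (forall u v, Y u v -> Y v u) ->
  (forall u v w, X u v -> X v w -> X u w) ->
  (forall u v w, Y u v -> Y v w -> Y u w) ->
  chain X Y l.+1 u b -> chain X Y l.+1 v b -> chain X Y (2 * l + 1) u v.
Proof.
move=> sX sY tX tY [g1 [g10 g1l g1s]] [g2 [g20 g2l g2s]].
exists (fun i => if i <= l then g1 i else g2 (2 * l + 1 - i)); split.
- by rewrite leq0n.
- have -> : (2 * l + 1 <= l) = false by lia.
  by rewrite subnn.
move=> i il /=; have [H|[H|H]] : i < l \/ l < i \/ i = l by lia.
- have -> : (i <= l) = true by lia.
  have -> : (i.+1 <= l) = true by lia.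
  apply: g1s; lia.
- have -> : (i <= l) = false by lia.
  have -> : (i.+1 <= l) = false by lia.
  have e1 : 2 * l + 1 - i = (2 * l - i).+1 by lia.
  have e2 : 2 * l + 1 - i.+1 = 2 * l - i by lia.
  rewrite e1 e2 -(@stp_rev2 X Y (2 * l) i); last by lia.
    apply: stp_sym => //; apply: g2s; lia.
  by rewrite oddM.
- subst i; rewrite leqnn.
  have -> : (l.+1 <= l) = false by lia.
  have -> : 2 * l + 1 - l.+1 = l by lia.
  apply: (stp_trans tX tY (g1s l (ltnSn l))).
  rewrite g1l -g2l; apply: stp_sym => //; exact: g2s.
Qed.

Lemma chain_cat X Y a b x y z : ~~ odd a ->
  chain X Y a x y -> chain X Y b y z -> chain X Y (a + b) x z.
Proof.
move=> ea [f [f0 fa fs]] [g [g0 gb gs]].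
exists (fun i => if i <= a then f i else g (i - a)); split.
- by rewrite leq0n.
- case: (leqP (a + b) a) => H.
    have b0 : b = 0 by lia.
    by subst b; rewrite addn0 fa -g0 -gb.
  by rewrite addKn.
move=> i il /=; have [H|[H|H]] : i < a \/ a < i \/ i = a by lia.
- have -> : (i <= a) = true by lia.
  have -> : (i.+1 <= a) = true by lia.
  apply: fs; lia.
- have -> : (i <= a) = false by lia.
  have -> : (i.+1 <= a) = false by lia.
  have e1 : i = a + (i - a) by lia.
  have e2 : i.+1 - a = (i - a).+1 by lia.
  rewrite e2 {1}e1 stp_shift //; apply: gs; lia.
- subst i; rewrite leqnn.
  have -> : (a.+1 <= a) = false by lia.
  have -> : a.+1 - a = 1 by lia.
  rewrite fa -g0 -(addn0 a) stp_shift // ; apply: gs; lia.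
Qed.

Lemma chain0 X Y x y : chain X Y 0 x y -> x = y.
Proof. by case=> f [<- <- _]. Qed.

Lemma chain_absorb X Y K x u w : (forall u v w, Y u v -> Y v w -> Y u w) ->
  0 < K -> chain X Y (2 * K) x u -> Y u w -> chain X Y (2 * K) x w.
Proof.
move=> tY K0 [f [f0 fu fs]] uw.
exists (fun i => if i < 2 * K then f i else w); split => //.
- by have -> : (0 < 2 * K) = true by lia.
- by rewrite ltnn.
move=> i il /=; have -> : (i < 2 * K) = true by lia.
have [H|[H|H]] : i.+1 < 2 * K \/ 2 * K < i.+1 \/ i.+1 = 2 * K by lia.
- by rewrite H; apply: fs.
- lia.
- rewrite H ltnn.
  have oi : odd i.
    have : odd i.+1 = false by rewrite H oddM.
    by rewrite /=; case: odd.
  have := fs i il; rewrite /stp oi H fu => Hi; exact: tY Hi uw.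
Qed.

Lemma chain_expand P X Z K r x y : (forall u v w, Z u v -> Z v w -> Z u w) ->
  0 < K -> (forall u v, P u v -> chain X Z (2 * K) u v) ->
  chain P Z (2 * r) x y -> chain X Z (2 * (r * K)) x y.
Proof.
move=> tZ K0 PX; elim: r x => [|r IH] x.
  by move/chain0 => ->; exists (fun _ => y); split.
have -> : 2 * r.+1 = (2 * r).+2 by lia.
case/chainS => u [xu]; case/chainS => w [uw H].
have -> : 2 * (r.+1 * K) = 2 * K + 2 * (r * K) by nia.
apply: chain_cat; first by rewrite oddM.
  exact: chain_absorb (PX _ _ xu) uw.
exact: IH.
Qed.
End Chains.

Lemma stp_map (T T2 : Type) (g : T -> T2) (X Y : relation T) (X' Y' : relation T2) i a b :
  (forall a b, X a b -> X' (g a) (g b)) -> (forall a b, Y a b -> Y' (g a) (g b)) ->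
  stp X Y i a b -> stp X' Y' i (g a) (g b).
Proof. by rewrite /stp; case: odd; auto. Qed.


Definition compat (S : signature) (A : algebra S) (R : relation A) :=
  forall (f : opsym S) (a b : 'I_(arity f) -> A),
    (forall i, R (a i) (b i)) -> R (@op S A f a) (@op S A f b).

Lemma rcomp_compat S (A : algebra S) (X Y : relation A) :
  compat X -> compat Y -> compat (rcomp X Y).
Proof.
move=> cX cY f a b H.
pose c i := proj1_sig (constructive_indefinite_description _ (H i)).
have Hc i : X (a i) (c i) /\ Y (c i) (b i).
  exact: (proj2_sig (constructive_indefinite_description _ (H i))).
exists (op (fun i => c i)); split.
  by apply: cX => i; case: (Hc i).
by apply: cY => i; case: (Hc i).
Qed.

Lemma altcomp_compat S (A : algebra S) (X Y : relation A) n :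
  compat X -> compat Y -> compat (altcomp X Y n.+1).
Proof.
elim: n X Y => [|n IH] X Y cX cY //=.
by apply: rcomp_compat => //; apply: IH.
Qed.

Section Sub.
Variables (S : signature) (A : algebra S) (R : relation A).
Hypothesis Rc : compat R.

Definition subcar := {p : A * A | R p.1 p.2}.
Definition subop (f : opsym S) (ps : 'I_(arity f) -> subcar) : subcar :=
  exist (fun p : A * A => R p.1 p.2)
    (@op S A f (fun i => (proj1_sig (ps i)).1), @op S A f (fun i => (proj1_sig (ps i)).2))
    (Rc (fun i => proj2_sig (ps i))).
Definition subalg : algebra S := @Algebra S subcar subop.

Lemma eval_sub (v : nat -> subalg) t :
  proj1_sig (eval v t) = (eval (fun n => (proj1_sig (v n)).1) t, eval (fun n => (proj1_sig (v n)).2) t).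
Proof.
elim: t => [n|f ts IH] /=; first by case: (proj1_sig (v n)).
congr pair; congr (@op S A f); apply: functional_extensionality => i; by rewrite IH.
Qed.

Lemma sub_in_var Sigma : in_variety Sigma A -> in_variety Sigma subalg.
Proof.
move=> HA e He v.
have H : proj1_sig (eval v e.1) = proj1_sig (eval v e.2).
  by rewrite !eval_sub (HA e He (fun n => (proj1_sig (v n)).1)) (HA e He (fun n => (proj1_sig (v n)).2)).
move: H; case: (eval v e.1) => p1 h1; case: (eval v e.2) => p2 h2 /= E.
subst p2; f_equal; apply: proof_irrelevance.
Qed.
End Sub.

Lemma chain_map (T T2 : Type) (g : T -> T2) (X Y : relation T) (X' Y' : relation T2) n u v :
  (forall a b, X a b -> X' (g a) (g b)) -> (forall a b, Y a b -> Y' (g a) (g b)) ->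
  chain X Y n u v -> chain X' Y' n (g u) (g v).
Proof.
move=> hX hY [f [f0 fn fs]]; exists (fun i => g (f i)); split; [by rewrite f0|by rewrite fn|].
by move=> i il; exact: (stp_map hX hY (fs i il)).
Qed.

Lemma keyL S (Sigma : identity S -> Prop) r (H3 : mk_modular Sigma 3 (2 * r))
  (A : algebra S) (HA : in_variety Sigma A) (alpha beta gamma : relation A)
  (ca : is_congruence alpha) (cb : is_congruence beta) (cg : is_congruence gamma)
  (R : relation A) (Rc : compat R) x y z w e e' :
  alpha x y -> R x e -> R z e -> rmeet alpha gamma z w -> R w e' -> R y e' ->
  chain (fun u v => alpha u v /\ exists b, R u b /\ R v b) (rmeet alpha gamma) (2 * r) x y.
Proof.
move=> axy Rxe Rze zw Rwe Rye.
pose B := subalg Rc.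
pose a' : relation B := fun p q => alpha (proj1_sig p).1 (proj1_sig q).1.
pose b' : relation B := fun p q => (proj1_sig p).2 = (proj1_sig q).2.
pose g' : relation B := fun p q => gamma (proj1_sig p).1 (proj1_sig q).1.
have ca' : is_congruence a'.
  case: ca => ra sa ta cpa; split => [p|p q|p q s|f a b H]; rewrite /a' /=; eauto.
have cg' : is_congruence g'.
  case: cg => ra sa ta cpa; split => [p|p q|p q s|f a b H]; rewrite /g' /=; eauto.
have cb' : is_congruence b'.
  split => [p|p q|p q s|f a b H]; rewrite /b' /=; try congruence.
  by congr (@op S A f); apply: functional_extensionality => i; exact: H.
pose P : B := exist (fun p : A * A => R p.1 p.2) (x, e) Rxe.
pose Q : B := exist (fun p : A * A => R p.1 p.2) (z, e) Rze.
pose Q' : B := exist (fun p : A * A => R p.1 p.2) (w, e') Rwe.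
pose Y : B := exist (fun p : A * A => R p.1 p.2) (y, e') Rye.
have := H3 B (@sub_in_var S A R Rc Sigma HA) a' b' g' ca' cb' cg' P Y.
case: zw => azw gzw.
move/(_ (conj axy (ex_intro _ Q (conj erefl (ex_intro _ Q' (conj (conj azw gzw) erefl)))))).
move/altcompE => H.
have := @chain_map B A (fun p => (proj1_sig p).1) _ _
  (fun u v => alpha u v /\ exists b, R u b /\ R v b) (rmeet alpha gamma) _ P Y _ _ H.
apply.
- move=> [[p1 p2] hp] [[q1 q2] hq] [/= apq bpq]; split => //.
  by exists p2; split => //; rewrite /b' /= in bpq; rewrite bpq.
- by move=> [[p1 p2] hp] [[q1 q2] hq] [/= apq gpq].
Qed.

Theorem theorem3p3 (S : signature) (Sigma : identity S -> Prop) (r q : nat) :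
  0 < r -> 0 < q ->
  mk_modular Sigma 3 (2 * r) ->
  mk_modular Sigma (2 ^ q.+1 - 1) (2 * r ^ q).
Proof.
move=> r0 _ H3 A HA alpha beta gamma ca cb cg.
have cd : is_congruence (rmeet alpha gamma).
  case: ca => ra sa ta cpa; case: cg => rg sg tg cpg.
  split => [u|u v [? ?]|u v w [? ?] [? ?]|f a b H]; split; eauto.
  - by apply: cpa => i; case: (H i).
  - by apply: cpg => i; case: (H i).
case: (cd) => rd sd td cpd.
case: (cb) => rb sb tb cpb.
have cT n : compat (altcomp beta (rmeet alpha gamma) n.+1).
  exact: altcomp_compat.
suff claim : forall x y, alpha x y -> chain beta (rmeet alpha gamma) (2 ^ q.+1 - 1) x y ->
    chain (rmeet alpha beta) (rmeet alpha gamma) (2 * r ^ q) x y.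
  move=> x y [axy H]; apply/altcompE; apply: claim => //; exact/altcompE.
elim: q => [|q IH] x y axy.
  rewrite (_ : 2 ^ 1 - 1 = 1) // => /altcompE Hb.
  apply/altcompE; rewrite expn0 muln1 /=; exists y; split => //.
have [l El] : exists l, 2 ^ q = l.+1 by exists (2 ^ q).-1; rewrite prednK // expn_gt0.
have -> : 2 ^ q.+2 - 1 = 4 * l + 3 by rewrite !expnS El; lia.
have e1 : 2 ^ q.+1 - 1 = 2 * l + 1 by rewrite expnS El; lia.
rewrite e1 in IH.
move=> [f [f0 fn g]].
pose T := altcomp beta (rmeet alpha gamma) l.+1.
have Txe : T x (f l.+1).
  apply/altcompE; rewrite -f0.
  have := @chain_shift _ beta (rmeet alpha gamma) f (4 * l + 3) 0 l.+1 isT ltac:(lia) g.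
  by rewrite add0n.
have Tze : T (f (2 * l + 1)) (f l.+1).
  apply/altcompE.
  have := @chain_rev _ beta (rmeet alpha gamma) f (4 * l + 3) (2 * l + 1) l sb sd rb rd
    ltac:(by rewrite oddD oddM) ltac:(lia) ltac:(lia) g.
  by have -> : 2 * l + 1 - l = l.+1 by lia.
have zw : rmeet alpha gamma (f (2 * l + 1)) (f (2 * l + 1).+1).
  have := g (2 * l + 1) ltac:(lia); by rewrite /stp oddD oddM.
have Twe : T (f (2 * l + 1).+1) (f (3 * l + 3)).
  apply/altcompE.
  have := @chain_shift _ beta (rmeet alpha gamma) f (4 * l + 3) (2 * l + 1).+1 l.+1
    ltac:(by rewrite /= oddD oddM) ltac:(lia) g.
  by have -> : (2 * l + 1).+1 + l.+1 = 3 * l + 3 by lia.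
have Tye : T y (f (3 * l + 3)).
  apply/altcompE; rewrite -fn.
  have := @chain_rev _ beta (rmeet alpha gamma) f (4 * l + 3) (4 * l + 3) l sb sd rb rd
    ltac:(by rewrite oddD oddM) ltac:(lia) ltac:(lia) g.
  by have -> : 4 * l + 3 - l = 3 * l + 3 by lia.
have := keyL H3 HA ca cb cg (cT l) axy Txe Tze zw Twe Tye.
rewrite expnS => H.
apply: (chain_expand td _ _ H); first by rewrite expn_gt0 r0.
move=> u v [auv [b [Rub Rvb]]]; apply: IH => //.
apply: (tt_chain sb sd tb td (b := b)); exact/altcompE.
Qed.
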